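(* Let $p$ be a real polynomial in variables $x_1,\ldots,x_k$, and let $M$ be $100\deg(p)$ times the sum of the absolute values of the coefficients of $p$. Define $q \in \mathbb{R}[x_1,\ldots,x_k,y_1,\ldots,y_k]$ by $$q := p \prod_{i=1}^k (1-x_i)^6 + M \left(\sum_{i=1}^k \big(y_i - g(x_i)\big)\right).$$ Then the following are equivalent: (a) $q(x_1,\ldots,x_k,y_1,\ldots,y_k) < 0$ for some real $x_1,\ldots,x_k,y_1,\ldots,y_k$ with $(x_i,y_i) \in R$ for every $1 \leq i \leq k$; (b) $p(x_1,\ldots,x_k)<0$ for some $x_1,\ldots,x_k \in \{1-1/n : n \in \mathbb{N}\}$.
   Context: $g(x):=2x^2-x$. $L:[0,1)\to\mathbb{R}$ is the continuous piecewise linear function which, for every positive integer $t$, on the interval $[1-\frac1t,1-\frac1{t+1}]$ is given by $L(x)=\frac{3t^2-t-2}{t(t+1)}x-\frac{2(t-1)}{t+1}$ (the linear function agreeing with $g$ at the endpoints of that interval). $R:=\{(x,y)\in[0,1]^2: y\ge L(x)\}$ (where $x$ ranges over the domain $[0,1)$ of $L$). $\mathbb{N}=\{1,2,3,\ldots\}$. *)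

(* Defs.v *)
From HB Require Import structures.
From mathcomp Require Import all_boot all_order all_algebra.
From mathcomp Require Import reals.
From mathcomp Require Import mpoly.
Set Implicit Arguments. Unset Strict Implicit. Unset Printing Implicit Defensive.
Import Order.TTheory GRing.Theory Num.Theory.
Local Open Scope ring_scope.

Section Defs.
Variable R : realType.

Definition g (x : R) : R := 2 * x ^+ 2 - x.

(* The linear piece of L on the interval [1 - 1/t, 1 - 1/(t+1)] *)
Definition Lpiece (t : nat) (x : R) : R :=
  (3 * t%:R ^+ 2 - t%:R - 2) / (t%:R * (t%:R + 1)) * x
  - 2 * (t%:R - 1) / (t%:R + 1).

(* For x in [0,1), the positive integer t with x in [1-1/t, 1-1/(t+1)) is
   floor (1/(1-x)); at the common endpoints both pieces agree with g. *)
Definition L (x : R) : R := Lpiece (Num.truncn (1 / (1 - x))) x.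

Definition inRegion (x y : R) : Prop :=
  0 <= x /\ x < 1 /\ 0 <= y /\ y <= 1 /\ L x <= y.

Definition tdeg (k : nat) (p : {mpoly R[k]}) : nat := (msize p).-1.

Definition Mconst (k : nat) (p : {mpoly R[k]}) : R :=
  100 * (tdeg p)%:R * \sum_(m <- msupp p) `|p@_m|.

Definition q_eval (k : nat) (p : {mpoly R[k]}) (x y : 'I_k -> R) : R :=
  p.@[x] * \prod_(i < k) (1 - x i) ^+ 6
  + Mconst p * \sum_(i < k) (y i - g (x i)).

End Defs.

(* Main.v *)
Require Import Defs.
From HB Require Import structures.
From mathcomp Require Import all_boot all_order all_algebra.
From mathcomp Require Import reals.
From mathcomp Require Import mpoly.
From mathcomp Require Import ring lra.
Import Order.TTheory GRing.Theory Num.Theory.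
Local Open Scope ring_scope.

Section H.
Variable R : realType.

Lemma expB_bound (a b : R) n : 0 <= a <= 1 -> 0 <= b <= 1 ->
  `|a ^+ n - b ^+ n| <= n%:R * `|a - b|.
Proof.
move=> /andP[a0 a1] /andP[b0 b1]; elim: n => [|n IH].
  by rewrite !expr0 subrr normr0 mul0r.
have -> : a ^+ n.+1 - b ^+ n.+1 = a * (a ^+ n - b ^+ n) + b ^+ n * (a - b).
  by rewrite !exprS; ring.
apply: (le_trans (ler_normD _ _)); rewrite !normrM.
have h1 : `|a| * `|a ^+ n - b ^+ n| <= `|a ^+ n - b ^+ n|.
  by rewrite ger0_norm // ler_piMl.
have h2 : `|b ^+ n| * `|a - b| <= `|a - b|.
  rewrite ger0_norm ?exprn_ge0 // ler_piMl // exprn_ile1 //.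
rewrite mulrSr mulrDl mul1r; lra.
Qed.

Lemma prod_bound (I : Type) (r : seq I) (u w : I -> R) :
  (forall i, 0 <= u i <= 1) -> (forall i, 0 <= w i <= 1) ->
  [/\ 0 <= \prod_(i <- r) u i <= 1, 0 <= \prod_(i <- r) w i <= 1 &
   `|\prod_(i <- r) u i - \prod_(i <- r) w i| <= \sum_(i <- r) `|u i - w i| ].
Proof.
move=> hu hw; elim: r => [|j r [/andP[U0 U1] /andP[W0 W1] IH]].
  by rewrite !big_nil subrr normr0 ler01 lexx.
rewrite !big_cons.
have /andP[uj0 uj1] := hu j; have /andP[wj0 wj1] := hw j.
set U := \prod_(i <- r) u i in U0 U1 IH *; set W := \prod_(i <- r) w i in W0 W1 IH *.
split.
- apply/andP; split; first exact: mulr_ge0.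
  by rewrite mulr_ile1.
- apply/andP; split; first exact: mulr_ge0.
  by rewrite mulr_ile1.
have -> : u j * U - w j * W = u j * (U - W) + W * (u j - w j) by ring.
apply: (le_trans (ler_normD _ _)); rewrite !normrM.
have h1 : `|u j| * `|U - W| <= `|U - W| by rewrite ger0_norm // ler_piMl.
have h2 : `|W| * `|u j - w j| <= `|u j - w j| by rewrite ger0_norm // ler_piMl.
lra.
Qed.
Lemma mdeg_tdeg k (p : {mpoly R[k]}) m : m \in msupp p -> (mdeg m <= tdeg p)%N.
Proof. by move=> /msize_mdeg_lt; rewrite /tdeg; case: (msize p). Qed.

Lemma meval_lip k (p : {mpoly R[k]}) (x c : 'I_k -> R) :
  (forall i, 0 <= x i <= 1) -> (forall i, 0 <= c i <= 1) ->
  `|p.@[x] - p.@[c]| <= (\sum_(m <- msupp p) `|p@_m|) * (tdeg p)%:R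
                          * \sum_i `|x i - c i|.
Proof.
move=> hx hc; rewrite !mevalE -sumrB -mulrA big_distrl /=.
apply: (le_trans (ler_norm_sum _ _ _)); rewrite big_seq_cond [X in _ <= X]big_seq_cond.
apply: ler_sum => m /andP[ms _]; rewrite -mulrBr normrM.
apply: ler_wpM2l; first exact: normr_ge0.
have hu : forall i, 0 <= x i ^+ m i <= 1.
  by move=> i; have /andP[h0 h1] := hx i; rewrite exprn_ge0 ?exprn_ile1.
have hw : forall i, 0 <= c i ^+ m i <= 1.
  by move=> i; have /andP[h0 h1] := hc i; rewrite exprn_ge0 ?exprn_ile1.
have [_ _ h] := @prod_bound 'I_k (index_enum 'I_k) _ _ hu hw.
apply: (le_trans h); rewrite mulrC big_distrl /=; apply: ler_sum => i _.
apply: (le_trans (expB_bound (x i) (c i) (m i) (hx i) (hc i))); rewrite mulrC ler_wpM2l //.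
rewrite ler_nat; apply: leq_trans (mdeg_tdeg _ _ _ ms).
by rewrite mdegE (bigD1 i) //= leq_addr.
Qed.
Lemma Lg_eq (t : nat) (x : R) : (0 < t)%N ->
  Lpiece t x - g x = 2 * (x - (1 - 1 / t%:R)) * ((1 - 1 / (t%:R + 1)) - x).
Proof.
move=> t0; have T0 : (t%:R : R) != 0 by rewrite pnatr_eq0 -lt0n.
have T1 : (t%:R + 1 : R) != 0 by rewrite natr1 pnatr_eq0.
rewrite /Lpiece /g; field; by rewrite T0 T1.
Qed.

Lemma one_dim (x : R) : 0 <= x < 1 -> exists n : nat, (0 < n)%N /\
  `|x - (1 - 1 / n%:R)| * (1 - x) ^+ 6 <= 100 * (L x - g x).
Proof.
move=> /andP[x0 x1].
have s0 : 0 < 1 - x by lra.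
have s1 : 1 - x <= 1 by lra.
set s := 1 - x in s0 s1 *.
have is0 : 0 <= 1 / s by rewrite divr_ge0 // ltW.
have [tl tu] := andP (truncn_itv is0).
rewrite /L -/s; set t := Num.truncn (1 / s) in tl tu *.
rewrite -natr1 in tu.
set T := (t%:R : R) in tl tu *.
have hs1 : 1 <= 1 / s by rewrite ler_pdivlMr // mul1r.
have T0 : 0 < T by lra.
have t0 : (0 < t)%N by rewrite -(ltr0n R).
rewrite Lg_eq // -/T.
have T10 : 0 < T + 1 by lra.
set A := 1 / T; set B := 1 / (T + 1).
have AT : A * T = 1 by rewrite /A mul1r mulVf // gt_eqF.
have BT : B * (T + 1) = 1 by rewrite /B mul1r mulVf // gt_eqF.
have A0 : 0 < A by rewrite /A divr_gt0.
have B0 : 0 < B by rewrite /B divr_gt0.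
have ss : s * (1 / s) = 1 by rewrite mul1r divff // gt_eqF.
have sT : s * T <= 1 by nra.
have sT1 : 1 < s * (T + 1) by nra.
have T1 : 1 <= T by rewrite /T ler1n.
have sA : s <= A.
  have : 0 <= (A - s) * T by rewrite mulrBl AT; lra.
  by rewrite pmulr_lge0 // subr_ge0.
have Bs : B < s.
  have : 0 < (s - B) * (T + 1) by rewrite mulrBl BT; lra.
  by rewrite pmulr_lgt0 // subr_gt0.
have AB : A - B = A * B.
  have -> : A * B = A * (B * (T + 1)) - B * (A * T) by ring.
  by rewrite AT BT; ring.
have A2B : A <= 2 * B.
  have : 0 <= A * B * (T - 1) by apply: mulr_ge0; [apply: mulr_ge0; apply: ltW | lra].
  have -> : A * B * (T - 1) = 2 * B * (A * T) - A * (B * (T + 1)) by ring.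
  rewrite AT BT; lra.
have A1 : A <= 1.
  have : 0 <= A * (T - 1) by apply: mulr_ge0; [apply: ltW | lra].
  have -> : A * (T - 1) = A * T - A by ring.
  rewrite AT; lra.
have s6 : s ^+ 6 <= A * A.
  have h2 : s ^+ 6 <= s * s.
    have : s ^+ 4 <= 1 by rewrite exprn_ile1 // ltW.
    rewrite (_ : s ^+ 6 = s * s * s ^+ 4); last by rewrite !exprS; ring.
    by move=> h; rewrite ler_piMr // mulr_ge0 // ltW.
  apply: (le_trans h2); nra.
have AA : A * A <= A * (2 * B) by apply: ler_wpM2l => //; apply: ltW.
have -> : x = 1 - s by rewrite /s; ring.
have [uv|vu] := lerP (A - s) (s - B).
- exists t; split => //; rewrite -/T -/A.
  have -> : 1 - s - (1 - A) = A - s by ring.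
  rewrite ger0_norm; last lra.
  have : (A - s) * s ^+ 6 <= (A - s) * (4 * (s - B)).
    by apply: ler_wpM2l; [lra | lra].
  have : 0 <= (A - s) * (s - B) by apply: mulr_ge0; lra.
  lra.
- exists t.+1; split => //; rewrite -natr1 -/T -/B.
  have -> : 1 - s - (1 - B) = - (s - B) by ring.
  rewrite normrN ger0_norm; last lra.
  have : (s - B) * s ^+ 6 <= (s - B) * (4 * (A - s)).
    by apply: ler_wpM2l; [lra | lra].
  have : 0 <= (A - s) * (s - B) by apply: mulr_ge0; lra.
  lra.
Qed.
Lemma prod01 (I : Type) (r : seq I) (P : pred I) (F : I -> R) :
  (forall i, 0 <= F i <= 1) -> 0 <= \prod_(i <- r | P i) F i <= 1.
Proof.
move=> hF; apply: (big_ind (fun v => 0 <= v <= 1)) => //; first by rewrite ler01 lexx.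
move=> a b /andP[a0 a1] /andP[b0 b1]; apply/andP; split; first exact: mulr_ge0.
by rewrite mulr_ile1.
Qed.

Lemma lat_facts (n : nat) : (0 < n)%N ->
  [/\ 0 < 1 / (n%:R : R), 1 / (n%:R : R) <= 1 &
      0 <= g (1 - 1 / (n%:R : R)) <= 1].
Proof.
move=> n0; have N1 : (1 : R) <= n%:R by rewrite ler1n.
have N0 : (0 : R) < n%:R by lra.
have aN : 1 / (n%:R : R) * n%:R = 1 by rewrite mul1r mulVf // gt_eqF.
set a := 1 / (n%:R : R) in aN *.
have a0 : 0 < a by rewrite /a divr_gt0.
have a1 : a <= 1 by nra.
split => //; rewrite /g.
have [n1|n2] := eqVneq n 1%N.
  have -> : a = 1 by rewrite /a n1 divr1.
  apply/andP; split; rewrite expr2; lra.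
have N2 : (2 : R) <= n%:R by rewrite ler_nat; case: n n0 n2 {N1 N0 aN a a0 a1} => [|[|]].
have a2 : a <= 1/2 by nra.
apply/andP; split; nra.
Qed.

Lemma L_lattice (n : nat) : (0 < n)%N -> L (1 - 1 / (n%:R : R)) = g (1 - 1 / n%:R).
Proof.
move=> n0; rewrite /L.
have -> : 1 - (1 - 1 / (n%:R : R)) = 1 / n%:R by ring.
rewrite !div1r invrK natrK.
have := Lg_eq n (1 - 1 / n%:R) n0; rewrite subrr mulr0 mul0r => /eqP.
by rewrite subr_eq0 div1r => /eqP.
Qed.
End H.

Theorem lemma5p3 (R : realType) (k : nat) (p : {mpoly R[k]}) :
  (exists x y : 'I_k -> R,
      (forall i, inRegion (x i) (y i)) /\ q_eval p x y < 0)
  <->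
  (exists x : 'I_k -> R,
      (forall i, exists n : nat, (0 < n)%N /\ x i = 1 - 1 / n%:R) /\
      p.@[x] < 0).
Proof.
split.
- move=> [x [y [hR hq]]].
  have hx : forall i, 0 <= x i <= 1.
    by move=> i; have [? [? _]] := hR i; apply/andP; split => //; apply: ltW.
  have hx' : forall i, 0 <= x i < 1.
    by move=> i; have [? [? _]] := hR i; apply/andP; split.
  have /fin_all_exists [n hn] := fun i => one_dim _ _ (hx' i).
  pose c := fun i => 1 - 1 / ((n i)%:R : R).
  have hc : forall i, 0 <= c i <= 1.
    move=> i; have [n0 _] := hn i; have [a0 a1 _] := lat_facts R _ n0.
    rewrite /c; apply/andP; split; lra.
  exists c; split; first by move=> i; exists (n i); split => //; case: (hn i).
  rewrite ltNge; apply/negP => pc0; move: hq; apply/negP; rewrite -leNgt.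
  set S := \sum_(m <- msupp p) `|p@_m|.
  set d := ((tdeg p)%:R : R).
  set P := \prod_(i < k) (1 - x i) ^+ 6.
  set D := \sum_i `|x i - c i|.
  have h01 : forall i, 0 <= (1 - x i) ^+ 6 <= 1.
    move=> i; have /andP[h0 h1] := hx i.
    by rewrite exprn_ge0 ?exprn_ile1 //; lra.
  have P0 : 0 <= P by case/andP: (prod01 _ _ (index_enum 'I_k) predT _ h01).
  have Pi : forall i, P <= (1 - x i) ^+ 6.
    move=> i; rewrite /P (bigD1 i) //=.
    have /andP[r0 r1] := prod01 _ _ (index_enum 'I_k) (fun j => j != i) _ h01.
    have /andP[e0 _] := h01 i.
    by rewrite ler_piMr.
  have lip := meval_lip _ _ p _ _ hx hc; rewrite -/S -/d -/D in lip.
  have S0 : 0 <= S by rewrite /S sumr_ge0 // => m _; apply: normr_ge0.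
  have d0 : 0 <= d by rewrite /d ler0n.
  have hpx : - (S * d * D) <= p.@[x].
    by move: lip; rewrite ler_norml => /andP[l1 _]; lra.
  have h1 : - (S * d * D) * P <= p.@[x] * P by apply: ler_wpM2r.
  have DP : D * P <= 100 * \sum_i (y i - g (x i)).
    rewrite /D big_distrl big_distrr /=; apply: ler_sum => i _.
    have [_ hi] := hn i; have [_ [_ [_ [_ hLy]]]] := hR i.
    apply: (le_trans _ (le_trans hi _)).
      by apply: ler_wpM2l; [apply: normr_ge0 | apply: Pi].
    by rewrite ler_wpM2l //; lra.
  have h2 : S * d * (D * P) <= S * d * (100 * \sum_i (y i - g (x i))).
    by apply: ler_wpM2l => //; apply: mulr_ge0.
  rewrite /q_eval /Mconst -/S -/d -/P.
  lra.
- move=> [x [hx hp]].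
  exists x, (fun i => g (x i)); split.
    move=> i; have [n [n0 ->]] := hx i.
    have [a0 a1 /andP[g0 g1]] := lat_facts R _ n0.
    rewrite /inRegion L_lattice //; do 4?split => //; lra.
  rewrite /q_eval.
  have -> : \sum_(i < k) (g (x i) - g (x i)) = 0 by rewrite big1 // => i _; rewrite subrr.
  rewrite mulr0 addr0.
  rewrite pmulr_llt0 // prodr_gt0 // => i _; rewrite exprn_gt0 //.
  have [n [n0 ->]] := hx i; have [a0 _ _] := lat_facts R _ n0; lra.
Qed.
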